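(* Let $f\colon A\to X$ and $g\colon A\to Y$ be morphisms in a pre-Hilbert $*$-category, and suppose there is an extension of $g$ along $f$ (a morphism $e\colon X\to Y$ with $ef=g$). Then: (i) there is a unique extension $h$ of $g$ along $f$ such that $\operatorname{Ker} h\geq (\operatorname{Ran} f)^\perp$; (ii) for this $h$, $(\operatorname{Ran} h)^{\perp\perp} = (\operatorname{Ran} g)^{\perp\perp}$; (iii) $f^*f=g^*g$ if and only if $h$ is partially isometric and $\operatorname{Ker} h\leq (\operatorname{Ran} f)^\perp$; (iv) if $f$ is epic, then $f^*f=g^*g$ if and only if $h$ is isometric; (v) if $f$ and $g$ are both epic, then $f^*f=g^*g$ if and only if $h$ is unitary.
   Context: A $*$-category is a category with a choice of $f^*\colon Y\to X$ for each $f\colon X\to Y$ such that $1^*=1$, $(gf)^*=f^*g^*$, $(f^* )^*=f$; $f$ is an isometry if $f^*f=1$, unitary if it is an invertible isometry, and a partial isometry if $f=ff^*f$. A pre-Hilbert $*$-category is a $*$-category with (R1) a zero object, (R2) orthonormal biproducts of all pairs of objects (biproducts $(X,s_1,r_1,s_2,r_2)$ with $r_k=s_k^*$), (R3) an isometric kernel for every morphism, and (R4) every diagonal $\Delta\colon X\to X\oplus X$ a kernel of some morphism. Subobjects of an object are compared by the usual preorder ($m\le n$ iff $m$ factors through $n$). $\operatorname{Ker} h$ is the subobject represented by a kernel of $h$. The range $\operatorname{Ran} f$ is the smallest subobject of the codomain through which $f$ factors (it exists in a pre-Hilbert $*$-category). For a subobject represented by a monomorphism $m$, its orthogonal complement $(\cdot)^\perp$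 is the subobject represented by a kernel of $m^*$; in particular $(\operatorname{Ran} f)^\perp=\operatorname{Ker} f^*$, and $(\cdot)^{\perp\perp}$ is the complement applied twice. *)

(* Defs.v *)
Set Implicit Arguments.

Record StarCat := {
  ob :> Type;
  hom : ob -> ob -> Type;
  comp : forall X Y Z : ob, hom Y Z -> hom X Y -> hom X Z;
  idm : forall X : ob, hom X X;
  star : forall X Y : ob, hom X Y -> hom Y X;
  comp_assoc : forall (W X Y Z : ob) (h : hom Y Z) (g : hom X Y) (f : hom W X),
      comp h (comp g f) = comp (comp h g) f;
  comp_id_l : forall (X Y : ob) (f : hom X Y), comp (idm Y) f = f;
  comp_id_r : forall (X Y : ob) (f : hom X Y), comp f (idm X) = f;
  star_id : forall X : ob, star (idm X) = idm X;
  star_comp : forall (X Y Z : ob) (g : hom Y Z) (f : hom X Y),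
      star (comp g f) = comp (star f) (star g);
  star_star : forall (X Y : ob) (f : hom X Y), star (star f) = f
}.

Arguments hom {s}.
Arguments comp {s X Y Z}.
Arguments idm {s}.
Arguments star {s X Y}.

Section Defs.
Variable C : StarCat.

Definition monic {A X : C} (m : hom A X) : Prop :=
  forall (W : C) (u v : hom W A), comp m u = comp m v -> u = v.
Definition epic {A X : C} (e : hom A X) : Prop :=
  forall (W : C) (u v : hom X W), comp u e = comp v e -> u = v.
Definition isometry {X Y : C} (f : hom X Y) : Prop := comp (star f) f = idm X.
Definition unitary {X Y : C} (f : hom X Y) : Prop :=
  isometry f /\ exists g : hom Y X, comp g f = idm X /\ comp f g = idm Y.
Definition partial_isometry {X Y : C} (f : hom X Y) : Prop :=
  f = comp f (comp (star f) f).

Definition zero_object (Z : C) : Prop :=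
  forall X : C, (exists! u : hom Z X, True) /\ (exists! v : hom X Z, True).
Definition zero_morph {X Y : C} (f : hom X Y) : Prop :=
  exists (Z : C) (a : hom X Z) (b : hom Z Y), zero_object Z /\ f = comp b a.

Definition is_kernel {K X Y : C} (h : hom X Y) (k : hom K X) : Prop :=
  zero_morph (comp h k) /\
  forall (W : C) (w : hom W X), zero_morph (comp h w) ->
    exists! u : hom W K, comp k u = w.

Definition biproduct {X1 X2 S : C} (s1 : hom X1 S) (r1 : hom S X1)
    (s2 : hom X2 S) (r2 : hom S X2) : Prop :=
  comp r1 s1 = idm X1 /\ comp r2 s2 = idm X2 /\
  zero_morph (comp r1 s2) /\ zero_morph (comp r2 s1) /\
  (forall (W : C) (a : hom W X1) (b : hom W X2),
      exists! u : hom W S, comp r1 u = a /\ comp r2 u = b) /\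
  (forall (W : C) (a : hom X1 W) (b : hom X2 W),
      exists! u : hom S W, comp u s1 = a /\ comp u s2 = b).
Definition orthonormal_biproduct {X1 X2 S : C} (s1 : hom X1 S) (r1 : hom S X1)
    (s2 : hom X2 S) (r2 : hom S X2) : Prop :=
  biproduct s1 r1 s2 r2 /\ r1 = star s1 /\ r2 = star s2.

Definition preHilbert : Prop :=
  (exists Z : C, zero_object Z) /\
  (forall X1 X2 : C, exists (S : C) (s1 : hom X1 S) (r1 : hom S X1)
       (s2 : hom X2 S) (r2 : hom S X2), orthonormal_biproduct s1 r1 s2 r2) /\
  (forall (X Y : C) (h : hom X Y), exists (K : C) (k : hom K X),
       is_kernel h k /\ isometry k) /\
  (forall (X S : C) (s1 : hom X S) (r1 : hom S X) (s2 : hom X S) (r2 : hom S X),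
       orthonormal_biproduct s1 r1 s2 r2 ->
       forall d : hom X S, comp r1 d = idm X -> comp r2 d = idm X ->
       exists (Z : C) (q : hom S Z), is_kernel q d).

(* subobjects: represented by monomorphisms, preordered by factorization *)
Definition sub_le {A B X : C} (m : hom A X) (n : hom B X) : Prop :=
  exists u : hom A B, m = comp n u.
Definition sub_eq {A B X : C} (m : hom A X) (n : hom B X) : Prop :=
  sub_le m n /\ sub_le n m.

Definition is_range {A X M : C} (f : hom A X) (m : hom M X) : Prop :=
  monic m /\ (exists u : hom A M, f = comp m u) /\
  forall (N : C) (n : hom N X), monic n ->
    (exists v : hom A N, f = comp n v) -> sub_le m n.

Definition is_perp {M P X : C} (m : hom M X) (p : hom P X) : Prop :=
  is_kernel (star m) p.

(* Ker h >= (Ran f)^perp, and Ker h <= (Ran f)^perp, stated for all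
   representatives (these exist in a pre-Hilbert *-category). *)
Definition ker_ge_perp_ran {A X Y : C} (h : hom X Y) (f : hom A X) : Prop :=
  forall (K M P : C) (k : hom K X) (m : hom M X) (p : hom P X),
    is_kernel h k -> is_range f m -> is_perp m p -> sub_le p k.
Definition ker_le_perp_ran {A X Y : C} (h : hom X Y) (f : hom A X) : Prop :=
  forall (K M P : C) (k : hom K X) (m : hom M X) (p : hom P X),
    is_kernel h k -> is_range f m -> is_perp m p -> sub_le k p.

Definition ran_perpperp_eq {X Y A : C} (h : hom X Y) (g : hom A Y) : Prop :=
  forall (M1 P1 Q1 M2 P2 Q2 : C) (m1 : hom M1 Y) (p1 : hom P1 Y) (q1 : hom Q1 Y)
         (m2 : hom M2 Y) (p2 : hom P2 Y) (q2 : hom Q2 Y),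
    is_range h m1 -> is_perp m1 p1 -> is_perp p1 q1 ->
    is_range g m2 -> is_perp m2 p2 -> is_perp p2 q2 ->
    sub_eq q1 q2.

End Defs.

Arguments monic {C A X}.
Arguments epic {C A X}.
Arguments isometry {C X Y}.
Arguments unitary {C X Y}.
Arguments partial_isometry {C X Y}.
Arguments zero_object {C}.
Arguments zero_morph {C X Y}.
Arguments is_kernel {C K X Y}.
Arguments biproduct {C X1 X2 S}.
Arguments orthonormal_biproduct {C X1 X2 S}.
Arguments sub_le {C A B X}.
Arguments sub_eq {C A B X}.
Arguments is_range {C A X M}.
Arguments is_perp {C M P X}.
Arguments ker_ge_perp_ran {C A X Y}.
Arguments ker_le_perp_ran {C A X Y}.
Arguments ran_perpperp_eq {C X Y A}.

(* Main.v *)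
Require Import Defs.
From Stdlib Require Import IndefiniteDescription.

Section PH.
Variable C : StarCat.
Hypothesis HC : preHilbert C.

Local Notation "g ∘ f" := (comp g f) (at level 40, left associativity).

Ltac ra := repeat rewrite <- comp_assoc.
Ltac la := repeat rewrite comp_assoc.

Lemma zero_comp_l {X Y W : C} (f : hom X Y) (g : hom Y W) :
  zero_morph f -> zero_morph (g ∘ f).
Proof. intros [Z [a [b [HZ ->]]]]. exists Z, a, (g ∘ b). split; auto. apply comp_assoc. Qed.

Lemma zero_comp_r {W X Y : C} (f : hom X Y) (g : hom W X) :
  zero_morph f -> zero_morph (f ∘ g).
Proof. intros [Z [a [b [HZ ->]]]]. exists Z, (a ∘ g), b. split; auto. symmetry; apply comp_assoc. Qed.

Lemma zero_star {X Y : C} (f : hom X Y) : zero_morph f -> zero_morph (star f).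
Proof. intros [Z [a [b [HZ ->]]]]. exists Z, (star b), (star a). split; auto. apply star_comp. Qed.

Lemma zero_unique {X Y : C} (f f' : hom X Y) : zero_morph f -> zero_morph f' -> f = f'.
Proof.
  intros [Z [a [b [HZ ->]]]] [Z' [a' [b' [HZ' ->]]]].
  destruct (HZ Z') as [[i _] _].
  destruct (HZ' X) as [_ [v [_ Hv]]].
  destruct (HZ Y) as [[w [_ Hw]] _].
  assert (E1 : a' = i ∘ a) by (rewrite <- (Hv a' I); apply Hv; auto).
  assert (E2 : b = b' ∘ i) by (rewrite <- (Hw b I); apply Hw; auto).
  subst. ra. reflexivity.
Qed.

Lemma zero_ex (X Y : C) : exists f : hom X Y, zero_morph f.
Proof.
  destruct HC as [[Z HZ] _].
  destruct (HZ X) as [_ [a _]]. destruct (HZ Y) as [[b _] _].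
  exists (b ∘ a), Z, a, b. auto.
Qed.

Definition zm (X Y : C) : hom X Y := proj1_sig (constructive_indefinite_description _ (zero_ex X Y)).
Lemma zm_spec X Y : zero_morph (zm X Y).
Proof. unfold zm. destruct constructive_indefinite_description; auto. Qed.
Lemma is_zm {X Y : C} (f : hom X Y) : zero_morph f -> f = zm X Y.
Proof. intro H. apply zero_unique; auto. apply zm_spec. Qed.
Lemma zm_l {X Y W : C} (g : hom Y W) : g ∘ zm X Y = zm X W.
Proof. apply is_zm, zero_comp_l, zm_spec. Qed.
Lemma zm_r {W X Y : C} (g : hom W X) : zm X Y ∘ g = zm W Y.
Proof. apply is_zm, zero_comp_r, zm_spec. Qed.
Lemma zm_star {X Y : C} : star (zm X Y) = zm Y X.
Proof. apply is_zm, zero_star, zm_spec. Qed.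
Lemma zm_zero {X Y : C} : zero_morph (zm X Y).
Proof. apply zm_spec. Qed.

Record BP (X1 X2 : C) := mkBP { bS : C; bi1 : hom X1 bS; bp1 : hom bS X1;
  bi2 : hom X2 bS; bp2 : hom bS X2; bok : orthonormal_biproduct bi1 bp1 bi2 bp2 }.

Lemma bp_ex (X1 X2 : C) : exists b : BP X1 X2, True.
Proof.
  destruct HC as [_ [H _]]. destruct (H X1 X2) as [S [s1 [r1 [s2 [r2 Hb]]]]].
  exists (@mkBP X1 X2 S s1 r1 s2 r2 Hb). auto.
Qed.
Arguments bS {X1 X2}. Arguments bi1 {X1 X2}. Arguments bi2 {X1 X2}. Arguments bp1 {X1 X2}. Arguments bp2 {X1 X2}. Arguments bok {X1 X2}.
Definition bp X1 X2 : BP X1 X2 := proj1_sig (constructive_indefinite_description _ (bp_ex X1 X2)).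
Definition SS X1 X2 := bS (bp X1 X2).
Definition i1 X1 X2 : hom X1 (SS X1 X2) := bi1 (bp X1 X2).
Definition i2 X1 X2 : hom X2 (SS X1 X2) := bi2 (bp X1 X2).
Definition p1 X1 X2 : hom (SS X1 X2) X1 := bp1 (bp X1 X2).
Definition p2 X1 X2 : hom (SS X1 X2) X2 := bp2 (bp X1 X2).
Arguments i1 {X1 X2}. Arguments i2 {X1 X2}. Arguments p1 {X1 X2}. Arguments p2 {X1 X2}.

Lemma bpok X1 X2 : orthonormal_biproduct (@i1 X1 X2) p1 i2 p2.
Proof. apply bok. Qed.

Lemma p1i1 X1 X2 : p1 ∘ @i1 X1 X2 = idm X1.
Proof. apply (bpok X1 X2). Qed.
Lemma p2i2 X1 X2 : p2 ∘ @i2 X1 X2 = idm X2.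
Proof. apply (bpok X1 X2). Qed.
Lemma p1i2 X1 X2 : p1 ∘ @i2 X1 X2 = zm _ _.
Proof. apply is_zm, (bpok X1 X2). Qed.
Lemma p2i1 X1 X2 : p2 ∘ @i1 X1 X2 = zm _ _.
Proof. apply is_zm, (bpok X1 X2). Qed.
Lemma p1s X1 X2 : @p1 X1 X2 = star i1.
Proof. apply (bpok X1 X2). Qed.
Lemma p2s X1 X2 : @p2 X1 X2 = star i2.
Proof. apply (bpok X1 X2). Qed.
Lemma i1s X1 X2 : @i1 X1 X2 = star p1.
Proof. rewrite p1s, star_star; auto. Qed.
Lemma i2s X1 X2 : @i2 X1 X2 = star p2.
Proof. rewrite p2s, star_star; auto. Qed.

Lemma pair_ex {W X1 X2 : C} (a : hom W X1) (b : hom W X2) :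
  exists u : hom W (SS X1 X2), p1 ∘ u = a /\ p2 ∘ u = b.
Proof.
  destruct (bpok X1 X2) as [[_ [_ [_ [_ [H _]]]]] _].
  destruct (H W a b) as [u [Hu _]]. eauto.
Qed.
Lemma copair_ex {W X1 X2 : C} (a : hom X1 W) (b : hom X2 W) :
  exists u : hom (SS X1 X2) W, u ∘ i1 = a /\ u ∘ i2 = b.
Proof.
  destruct (bpok X1 X2) as [[_ [_ [_ [_ [_ H]]]]] _].
  destruct (H W a b) as [u [Hu _]]. eauto.
Qed.
Definition pair {W X1 X2 : C} (a : hom W X1) (b : hom W X2) :=
  proj1_sig (constructive_indefinite_description _ (pair_ex a b)).
Definition copair {W X1 X2 : C} (a : hom X1 W) (b : hom X2 W) :=
  proj1_sig (constructive_indefinite_description _ (copair_ex a b)).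
Lemma pair_p1 {W X1 X2 : C} (a : hom W X1) (b : hom W X2) : p1 ∘ pair a b = a.
Proof. unfold pair. destruct constructive_indefinite_description as [u [H1 H2]]; auto. Qed.
Lemma pair_p2 {W X1 X2 : C} (a : hom W X1) (b : hom W X2) : p2 ∘ pair a b = b.
Proof. unfold pair. destruct constructive_indefinite_description as [u [H1 H2]]; auto. Qed.
Lemma copair_i1 {W X1 X2 : C} (a : hom X1 W) (b : hom X2 W) : copair a b ∘ i1 = a.
Proof. unfold copair. destruct constructive_indefinite_description as [u [H1 H2]]; auto. Qed.
Lemma copair_i2 {W X1 X2 : C} (a : hom X1 W) (b : hom X2 W) : copair a b ∘ i2 = b.
Proof. unfold copair. destruct constructive_indefinite_description as [u [H1 H2]]; auto. Qed.
Lemma pair_uniq {W X1 X2 : C} (u v : hom W (SS X1 X2)) :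
  p1 ∘ u = p1 ∘ v -> p2 ∘ u = p2 ∘ v -> u = v.
Proof.
  intros E1 E2.
  destruct (bpok X1 X2) as [[_ [_ [_ [_ [H _]]]]] _].
  destruct (H W (p1 ∘ u) (p2 ∘ u)) as [x [_ Hx]].
  transitivity x; [symmetry|]; apply Hx; auto.
Qed.
Lemma copair_uniq {W X1 X2 : C} (u v : hom (SS X1 X2) W) :
  u ∘ i1 = v ∘ i1 -> u ∘ i2 = v ∘ i2 -> u = v.
Proof.
  intros E1 E2.
  destruct (bpok X1 X2) as [[_ [_ [_ [_ [_ H]]]]] _].
  destruct (H W (u ∘ i1) (u ∘ i2)) as [x [_ Hx]].
  transitivity x; [symmetry|]; apply Hx; auto.
Qed.

Definition diag (X : C) : hom X (SS X X) := pair (idm X) (idm X).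
Definition codiag (X : C) : hom (SS X X) X := copair (idm X) (idm X).
Definition add {X Y : C} (f g : hom X Y) : hom X Y := codiag Y ∘ pair f g.

Lemma cx {V W X Y : C} {a : hom X Y} {b : hom W X} {c : hom W Y} (E : a ∘ b = c) (x : hom Y V) :
  x ∘ a ∘ b = x ∘ c.
Proof. rewrite <- comp_assoc, E; auto. Qed.

Ltac sb1 := rewrite ?p1i1, ?p2i2, ?p1i2, ?p2i1, ?pair_p1, ?pair_p2, ?copair_i1, ?copair_i2, ?comp_id_l, ?comp_id_r, ?zm_l, ?zm_r,
  ?(cx (p1i1 _ _)), ?(cx (p2i2 _ _)), ?(cx (p1i2 _ _)), ?(cx (p2i1 _ _)),
  ?(cx (pair_p1 _ _)), ?(cx (pair_p2 _ _)), ?(cx (copair_i1 _ _)), ?(cx (copair_i2 _ _)), ?(cx (zm_r _)).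
Ltac sb := la; repeat progress (sb1; la).

Lemma pair_comp {V W X1 X2 : C} (a : hom W X1) (b : hom W X2) (k : hom V W) :
  pair a b ∘ k = pair (a ∘ k) (b ∘ k).
Proof. apply pair_uniq; rewrite comp_assoc; rewrite ?pair_p1, ?pair_p2; auto. Qed.
Lemma comp_copair {V W X1 X2 : C} (a : hom X1 W) (b : hom X2 W) (k : hom W V) :
  k ∘ copair a b = copair (k ∘ a) (k ∘ b).
Proof. apply copair_uniq; ra; rewrite ?copair_i1, ?copair_i2; auto. Qed.

Lemma add_alt {X Y : C} (f g : hom X Y) : add f g = copair f g ∘ diag X.
Proof.
  assert (HM : pair (f ∘ p1) (g ∘ p2) = copair (i1 ∘ f) (i2 ∘ g)).
  { apply pair_uniq.
    - rewrite pair_p1. apply copair_uniq; sb; auto.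
    - rewrite pair_p2. apply copair_uniq; sb; auto. }
  assert (HP : pair f g = pair (f ∘ p1) (g ∘ p2) ∘ diag X).
  { unfold diag. apply pair_uniq; sb; auto. }
  unfold add. rewrite HP, HM. unfold codiag. la. f_equal.
  apply copair_uniq; sb; auto.
Qed.


Lemma add_comp_l {X Y W : C} (f g : hom X Y) (h : hom Y W) : h ∘ add f g = add (h ∘ f) (h ∘ g).
Proof. rewrite !add_alt, comp_assoc, comp_copair; auto. Qed.
Lemma add_comp_r {V X Y : C} (f g : hom X Y) (k : hom V X) : add f g ∘ k = add (f ∘ k) (g ∘ k).
Proof. unfold add. rewrite <- comp_assoc, pair_comp; auto. Qed.
Lemma pair_zero_r {W X : C} (f : hom W X) : pair f (zm W X) = i1 ∘ f.
Proof. apply pair_uniq; sb; auto. Qed.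
Lemma pair_zero_l {W X : C} (f : hom W X) : pair (zm W X) f = i2 ∘ f.
Proof. apply pair_uniq; sb; auto. Qed.
Lemma add_zero_r {X Y : C} (f : hom X Y) : add f (zm X Y) = f.
Proof. unfold add, codiag. rewrite pair_zero_r. sb; auto. Qed.
Lemma add_zero_l {X Y : C} (f : hom X Y) : add (zm X Y) f = f.
Proof. unfold add, codiag. rewrite pair_zero_l. sb; auto. Qed.
Lemma interchange {X Y : C} (a b c d : hom X Y) :
  add (add a b) (add c d) = add (add a c) (add b d).
Proof.
  assert (HN : pair (copair a b) (copair c d) = copair (pair a c) (pair b d)).
  { apply pair_uniq; apply copair_uniq; sb; auto. }
  assert (H1 : pair (add a b) (add c d) = pair (copair a b) (copair c d) ∘ diag X).
  { rewrite !add_alt, pair_comp; auto. }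
  unfold add at 1. rewrite H1, HN, comp_assoc, comp_copair.
  rewrite (add_alt (add a c)). f_equal.
Qed.
Lemma add_comm {X Y : C} (a b : hom X Y) : add a b = add b a.
Proof.
  pose proof (interchange (zm X Y) a b (zm X Y)) as H.
  rewrite !add_zero_l, !add_zero_r in H. auto.
Qed.
Lemma add_assoc {X Y : C} (a b d : hom X Y) : add (add a b) d = add a (add b d).
Proof.
  pose proof (interchange a b (zm X Y) d) as H.
  rewrite !add_zero_l, !add_zero_r in H. auto.
Qed.
Lemma star_pair {W X1 X2 : C} (a : hom W X1) (b : hom W X2) :
  star (pair a b) = copair (star a) (star b).
Proof.
  apply copair_uniq.
  - rewrite copair_i1, i1s, <- star_comp, pair_p1; auto.
  - rewrite copair_i2, i2s, <- star_comp, pair_p2; auto.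
Qed.
Lemma star_diag (X : C) : star (diag X) = codiag X.
Proof. unfold diag, codiag. rewrite star_pair, star_id; auto. Qed.
Lemma star_codiag (X : C) : star (codiag X) = diag X.
Proof. rewrite <- star_diag, star_star; auto. Qed.
Lemma star_add {X Y : C} (f g : hom X Y) : star (add f g) = add (star f) (star g).
Proof. rewrite (add_alt (star f)). unfold add. rewrite star_comp, star_pair, star_codiag; auto. Qed.
Lemma pair_eta {W X1 X2 : C} (u : hom W (SS X1 X2)) : u = pair (p1 ∘ u) (p2 ∘ u).
Proof. apply pair_uniq; sb; auto. Qed.
Lemma pair_add {W X1 X2 : C} (a : hom W X1) (b : hom W X2) : pair a b = add (i1 ∘ a) (i2 ∘ b).
Proof. apply pair_uniq; rewrite !add_comp_l; sb; rewrite ?add_zero_l, ?add_zero_r; auto. Qed.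
Lemma copair_pair {W X1 X2 V : C} (a : hom X1 V) (b : hom X2 V) (c : hom W X1) (d : hom W X2) :
  copair a b ∘ pair c d = add (a ∘ c) (b ∘ d).
Proof. rewrite pair_add, add_comp_l. sb. auto. Qed.


Lemma ker_zero {K X Y : C} {h : hom X Y} {k : hom K X} : is_kernel h k -> h ∘ k = zm K Y.
Proof. intros [H _]. apply is_zm; auto. Qed.
Lemma ker_fact {K X Y W : C} {h : hom X Y} {k : hom K X} (w : hom W X) :
  is_kernel h k -> h ∘ w = zm W Y -> exists u, k ∘ u = w.
Proof.
  intros [_ H] E. destruct (H W w) as [u [Hu _]]. rewrite E; apply zm_spec. eauto.
Qed.
Lemma ker_monic {K X Y : C} {h : hom X Y} {k : hom K X} : is_kernel h k -> monic k.
Proof.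
  intros Hk W u v E. destruct Hk as [H0 H].
  destruct (H W (k ∘ u)) as [x [_ Hx]].
  { rewrite comp_assoc. apply zero_comp_r; auto. }
  transitivity x; [symmetry|]; apply Hx; auto.
Qed.
Lemma iso_monic {X Y : C} {k : hom X Y} : isometry k -> monic k.
Proof.
  intros Hk W u v E. unfold isometry in Hk.
  rewrite <- (comp_id_l _ _ _ u), <- (comp_id_l _ _ _ v), <- Hk, <- !comp_assoc, E. auto.
Qed.
Lemma R3 {X Y : C} (h : hom X Y) : exists K (k : hom K X), is_kernel h k /\ isometry k.
Proof. destruct HC as [_ [_ [H _]]]. apply H. Qed.

Lemma neg_ex (X : C) : exists n : hom X X, add (idm X) n = zm X X.
Proof.
  destruct HC as [_ [_ [_ R4]]].
  destruct (R4 X (SS X X) i1 p1 i2 p2 (bpok X X) (diag X)) as [Z [q Hq]].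
  { apply pair_p1. } { apply pair_p2. }
  destruct (R3 (star (diag X))) as [K [k [Hk Hkiso]]].
  set (u := p1 ∘ k). set (w := p2 ∘ k).
  assert (Hkp : k = pair u w) by apply pair_eta.
  assert (Huw : add u w = zm K X).
  { unfold add. rewrite <- Hkp, <- star_diag. apply (ker_zero Hk). }
  assert (Hperp : forall W (t : hom W (SS X X)), star k ∘ t = zm W K -> p1 ∘ t = p2 ∘ t).
  { intros W t Ht.
    destruct (ker_fact (star q) Hk) as [v Hv].
    { rewrite <- star_comp, (ker_zero Hq), zm_star; auto. }
    destruct (ker_fact t Hq) as [z Hz].
    { rewrite <- (star_star _ _ _ q), <- Hv, star_comp, <- comp_assoc, Ht, zm_l; auto. }
    rewrite <- Hz. unfold diag. sb. auto. }
  assert (Hks : star k = copair (star u) (star w)) by (rewrite Hkp at 1; apply star_pair).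
  assert (Hkk : add (star u ∘ u) (star w ∘ w) = idm K).
  { rewrite <- copair_pair, <- Hks, <- Hkp. apply Hkiso. }
  assert (H1 : add (star u ∘ u) (star u ∘ w) = zm K K).
  { rewrite <- add_comp_l, Huw, zm_l; auto. }
  assert (H2 : add (star w ∘ u) (star w ∘ w) = zm K K).
  { rewrite <- add_comp_l, Huw, zm_l; auto. }
  assert (E : add (add (idm K) (star u ∘ w)) (star w ∘ u) = zm K K).
  { rewrite <- Hkk, add_assoc, interchange, (add_comm (star w ∘ w)), H1, H2, add_zero_l; auto. }
  set (t := pair (add (idm X) (w ∘ star u)) (u ∘ star u)).
  assert (Ht : star k ∘ t = zm X K).
  { transitivity (add (add (idm K) (star u ∘ w)) (star w ∘ u) ∘ star u).
    - unfold t. rewrite Hks, copair_pair, !add_comp_l, !add_comp_r. sb. auto.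
    - rewrite E, zm_r; auto. }
  pose proof (Hperp X t Ht) as Hp. unfold t in Hp. rewrite pair_p1, pair_p2 in Hp.
  exists (add (w ∘ star u) (w ∘ star u)).
  rewrite <- add_assoc, Hp, <- add_comp_r, Huw, zm_r. auto.
Qed.


Definition negid (X : C) : hom X X := proj1_sig (constructive_indefinite_description _ (neg_ex X)).
Lemma negid_spec X : add (idm X) (negid X) = zm X X.
Proof. unfold negid. destruct constructive_indefinite_description; auto. Qed.
Definition neg {X Y : C} (f : hom X Y) : hom X Y := negid Y ∘ f.

Lemma add_neg_r {X Y : C} (f : hom X Y) : add f (neg f) = zm X Y.
Proof.
  unfold neg. transitivity (add (idm Y) (negid Y) ∘ f).
  - rewrite add_comp_r, comp_id_l; auto.
  - rewrite negid_spec, zm_r; auto.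
Qed.
Lemma add_neg_l {X Y : C} (f : hom X Y) : add (neg f) f = zm X Y.
Proof. rewrite add_comm; apply add_neg_r. Qed.
Lemma add_cancel_r {X Y : C} (a b c : hom X Y) : add a c = add b c -> a = b.
Proof.
  intro E. rewrite <- (add_zero_r a), <- (add_zero_r b), <- (add_neg_r c), <- !add_assoc, E; auto.
Qed.
Lemma neg_uniq {X Y : C} (a b : hom X Y) : add a b = zm X Y -> b = neg a.
Proof. intro E. apply (add_cancel_r _ _ a). rewrite add_comm, E, add_neg_l; auto. Qed.
Lemma sub0 {X Y : C} (a b : hom X Y) : add a (neg b) = zm X Y -> a = b.
Proof. intro E. apply (add_cancel_r _ _ (neg b)). rewrite E, add_neg_r; auto. Qed.
Lemma neg_comp_l {X Y W : C} (f : hom X Y) (g : hom Y W) : g ∘ neg f = neg (g ∘ f).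
Proof. apply neg_uniq. rewrite <- add_comp_l, add_neg_r, zm_l; auto. Qed.
Lemma neg_comp_r {V X Y : C} (f : hom X Y) (k : hom V X) : neg f ∘ k = neg (f ∘ k).
Proof. unfold neg. rewrite comp_assoc; auto. Qed.
Lemma star_neg {X Y : C} (f : hom X Y) : star (neg f) = neg (star f).
Proof. apply neg_uniq. rewrite <- star_add, add_neg_r, zm_star; auto. Qed.
Lemma neg_zm {X Y : C} : neg (zm X Y) = zm X Y.
Proof. unfold neg. apply zm_l. Qed.
Lemma sub_eq {X Y : C} (a b c : hom X Y) : add a (neg b) = c -> add a (neg c) = b.
Proof.
  intro E. assert (Ea : a = add c b).
  { rewrite <- E, add_assoc, add_neg_l, add_zero_r; auto. }
  rewrite Ea, add_comm, <- add_assoc, add_neg_l, add_zero_l; auto.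
Qed.


Lemma star_zero_eq {X Y : C} (a : hom X Y) : star a = zm Y X -> a = zm X Y.
Proof. intro E. rewrite <- (star_star _ _ _ a), E, zm_star; auto. Qed.

Lemma range_ex {A X : C} (f : hom A X) : exists M (m : hom M X), is_range f m.
Proof.
  destruct (R3 f) as [I [i [Hi Hiiso]]].
  destruct (R3 (star i)) as [J [j [Hj Hjiso]]].
  assert (Hij : star i ∘ j = zm J I) by apply (ker_zero Hj).
  assert (Hjker : forall W (t : hom W A), star j ∘ t = zm W J -> f ∘ t = zm W X).
  { intros W t Ht.
    destruct (ker_fact (star f) Hj) as [v Hv].
    { rewrite <- star_comp, (ker_zero Hi), zm_star; auto. }
    rewrite <- (star_star _ _ _ f), <- Hv, star_comp, <- comp_assoc, Ht, zm_l; auto. }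
  exists J, (f ∘ j). split; [|split].
  - intros W a b Eab.
    set (d := add a (neg b)).
    assert (Hd : f ∘ (j ∘ d) = zm W X).
    { unfold d. rewrite !add_comp_l, !neg_comp_l. la. rewrite Eab. apply add_neg_r. }
    destruct (ker_fact _ Hi Hd) as [v Hv].
    assert (Hv0 : v = zm W I).
    { rewrite <- (comp_id_l _ _ _ v), <- Hiiso, <- comp_assoc, Hv, comp_assoc, Hij, zm_r; auto. }
    assert (Hd0 : d = zm W J).
    { rewrite <- (comp_id_l _ _ _ d), <- Hjiso, <- comp_assoc, <- Hv, Hv0, !zm_l; auto. }
    apply sub0; auto.
  - exists (star j).
    set (E := add (idm A) (neg (j ∘ star j))).
    assert (HE : star j ∘ E = zm A J).
    { unfold E. rewrite add_comp_l, neg_comp_l, comp_id_r, comp_assoc, Hjiso, comp_id_l.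
      apply add_neg_r. }
    pose proof (Hjker _ _ HE) as HfE. unfold E in HfE.
    rewrite add_comp_l, neg_comp_l, comp_id_r in HfE.
    rewrite <- comp_assoc. apply sub0. auto.
  - intros N n Hn [v Hv]. exists (v ∘ j). rewrite Hv, comp_assoc; auto.
Qed.

Lemma perp_anti {M M' P P' X : C} (m : hom M X) (m' : hom M' X) (p : hom P X) (p' : hom P' X) :
  sub_le m m' -> is_perp m p -> is_perp m' p' -> sub_le p' p.
Proof.
  intros [u Hu] Hp Hp'.
  destruct (ker_fact p' Hp) as [w Hw].
  { rewrite Hu, star_comp, <- comp_assoc, (ker_zero Hp'), zm_l; auto. }
  exists w; auto.
Qed.

Lemma range_perp_le {A X P M P' : C} (f : hom A X) (p : hom P X) (m : hom M X) (p' : hom P' X) :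
  is_kernel (star f) p -> is_range f m -> is_perp m p' -> sub_le p' p.
Proof.
  intros Hp [_ [[u0 Hu0] _]] Hp'.
  destruct (ker_fact p' Hp) as [w Hw].
  { rewrite Hu0, star_comp, <- comp_assoc, (ker_zero Hp'), zm_l; auto. }
  exists w; auto.
Qed.

Lemma range_perp_ge {A X P M P' : C} (f : hom A X) (p : hom P X) (m : hom M X) (p' : hom P' X) :
  is_kernel (star f) p -> is_range f m -> is_perp m p' -> sub_le p p'.
Proof.
  intros Hp [Hm [_ Hmin]] Hp'.
  destruct (R3 (star p)) as [N [n [Hn Hniso]]].
  destruct (ker_fact f Hn) as [v Hv].
  { apply star_zero_eq. rewrite star_comp, star_star, (ker_zero Hp); auto. }
  destruct (Hmin N n (iso_monic Hniso)) as [w Hw]. { exists v; auto. }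
  destruct (ker_fact p Hp') as [a Ha].
  { apply star_zero_eq. rewrite star_comp, star_star, Hw, comp_assoc, (ker_zero Hn), zm_r; auto. }
  exists a; auto.
Qed.


Lemma main (A X Y : C) (f : hom A X) (g : hom A Y)
  (Hext : exists e : hom X Y, comp e f = g) :
  exists h : hom X Y,
    (comp h f = g /\ ker_ge_perp_ran h f /\
     forall h' : hom X Y, comp h' f = g -> ker_ge_perp_ran h' f -> h' = h) /\
    ran_perpperp_eq h g /\
    (comp (star f) f = comp (star g) g <->
       partial_isometry h /\ ker_le_perp_ran h f) /\
    (epic f -> (comp (star f) f = comp (star g) g <-> isometry h)) /\
    (epic f -> epic g -> (comp (star f) f = comp (star g) g <-> unitary h)).
Proof.
  destruct Hext as [e He].
  destruct (R3 (star f)) as [P [p [Hp Hpiso]]].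
  unfold isometry in Hpiso.
  remember (add (idm X) (neg (p ∘ star p))) as Pr eqn:HPr.
  assert (Hpf : star p ∘ f = zm A P).
  { apply star_zero_eq; rewrite star_comp, star_star; apply (ker_zero Hp). }
  assert (HPrf : Pr ∘ f = f).
  { rewrite HPr, add_comp_r, neg_comp_r, comp_id_l, <- comp_assoc, Hpf, zm_l, neg_zm, add_zero_r; auto. }
  assert (HPrp : Pr ∘ p = zm P X).
  { rewrite HPr, add_comp_r, neg_comp_r, comp_id_l, <- comp_assoc, Hpiso, comp_id_r; apply add_neg_r. }
  assert (HPrs : star Pr = Pr).
  { rewrite HPr, star_add, star_neg, star_id, star_comp, star_star; auto. }
  assert (HpPr : star p ∘ Pr = zm X P).
  { rewrite <- HPrs, <- star_comp, HPrp, zm_star; auto. }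
  assert (HPrPr : Pr ∘ Pr = Pr).
  { rewrite HPr at 1. rewrite add_comp_r, comp_id_l, neg_comp_r, <- comp_assoc, HpPr, zm_l, neg_zm, add_zero_r; auto. }
  assert (Hfact : forall W (t : hom W X), star f ∘ t = zm W A -> Pr ∘ t = zm W X).
  { intros W t Ht. destruct (ker_fact t Hp Ht) as [v Hv].
    rewrite <- Hv, comp_assoc, HPrp, zm_r; auto. }
  assert (Hfact2 : forall W (t : hom W X), Pr ∘ t = zm W X -> t = p ∘ (star p ∘ t)).
  { intros W t Ht. apply sub0. rewrite HPr, add_comp_r, comp_id_l, neg_comp_r in Ht.
    rewrite comp_assoc; auto. }
  exists (e ∘ Pr).
  assert (Hhf : e ∘ Pr ∘ f = g) by (rewrite <- comp_assoc, HPrf; auto).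
  assert (Hhp : e ∘ Pr ∘ p = zm P Y) by (rewrite <- comp_assoc, HPrp, zm_l; auto).
  assert (HhPr : e ∘ Pr ∘ Pr = e ∘ Pr) by (rewrite <- comp_assoc, HPrPr; auto).
  assert (HPrh : Pr ∘ star (e ∘ Pr) = star (e ∘ Pr)).
  { rewrite star_comp, HPrs, comp_assoc, HPrPr; auto. }
  set (h := e ∘ Pr) in *.
  assert (HhhPr : star f ∘ f = star g ∘ g -> star h ∘ h = Pr).
  { intro Hfg.
    set (D := add (star h ∘ h) (neg Pr)).
    assert (HDf0 : star f ∘ (D ∘ f) = zm A A).
    { unfold D. rewrite add_comp_r, neg_comp_r, <- comp_assoc, Hhf, HPrf.
      rewrite add_comp_l, neg_comp_l, comp_assoc, <- star_comp, Hhf, Hfg. apply add_neg_r. }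
    assert (HPrD : Pr ∘ D = D).
    { unfold D. rewrite add_comp_l, neg_comp_l, comp_assoc, HPrh, HPrPr; auto. }
    assert (HDf : D ∘ f = zm A X).
    { rewrite <- HPrD, <- comp_assoc, (Hfact _ _ HDf0); auto. }
    assert (HDs : star D = D).
    { unfold D. rewrite star_add, star_neg, star_comp, star_star, HPrs; auto. }
    assert (HfD : star f ∘ D = zm X A).
    { apply star_zero_eq. rewrite star_comp, star_star, HDs, HDf; auto. }
    assert (HD0 : D = zm X X).
    { rewrite <- HPrD. apply Hfact; auto. }
    apply sub0; auto. }
  assert (Hiv : epic f -> (comp (star f) f = comp (star g) g <-> isometry h)).
  { intro Hfe. split.
    - intro Hfg. unfold isometry. rewrite (HhhPr Hfg). apply Hfe.
      rewrite HPrf, comp_id_l; auto.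
    - intro Hiso. rewrite <- Hhf, star_comp, <- comp_assoc,
        (comp_assoc _ _ _ _ _ (star h)), Hiso, comp_id_l; auto. }
  split; [split; [exact Hhf | split] | split; [|split; [|split; [exact Hiv|]]]].
  -
    intros K M P' k m p' Hk Hm Hp'.
    destruct (range_perp_le f p m p' Hp Hm Hp') as [a Ha].
    destruct (ker_fact p' Hk) as [b Hb].
    { rewrite Ha, comp_assoc, Hhp, zm_r; auto. }
    exists b; auto.
  -
    intros h' Hh'f Hh'ker.
    destruct (R3 h') as [K [k [Hk _]]].
    destruct (range_ex f) as [M [m Hm]].
    destruct (R3 (star m)) as [P' [p' [Hp' _]]].
    destruct (Hh'ker K M P' k m p' Hk Hm Hp') as [a Ha].
    destruct (range_perp_ge f p m p' Hp Hm Hp') as [b Hb].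
    assert (Hh'p : h' ∘ p = zm P Y).
    { rewrite Hb, Ha, !comp_assoc, (ker_zero Hk), !zm_r; auto. }
    assert (Hh'Pr : h' ∘ Pr = h').
    { rewrite HPr, add_comp_l, comp_id_r, neg_comp_l, comp_assoc, Hh'p, zm_r, neg_zm, add_zero_r; auto. }
    set (d := add h' (neg e)).
    assert (Hdf : d ∘ f = zm A Y).
    { unfold d. rewrite add_comp_r, neg_comp_r, Hh'f, He. apply add_neg_r. }
    destruct (ker_fact (star d) Hp) as [v Hv].
    { rewrite <- star_comp, Hdf, zm_star; auto. }
    assert (HdPr : d ∘ Pr = zm X Y).
    { rewrite <- (star_star _ _ _ d), <- Hv, star_comp, <- comp_assoc, HpPr, zm_l; auto. }
    unfold d in HdPr. rewrite add_comp_r, neg_comp_r, Hh'Pr in HdPr.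
    apply sub0; auto.
  -
    intros M1 P1 Q1 M2 P2 Q2 m1 pp1 q1 m2 pp2 q2 Hm1 Hp1 Hq1 Hm2 Hp2 Hq2.
    assert (Hm21 : sub_le m2 m1).
    { destruct Hm1 as [Hm1mon [[u1 Hu1] _]]. destruct Hm2 as [_ [_ Hmin2]].
      apply (Hmin2 M1 m1 Hm1mon). exists (u1 ∘ f).
      rewrite <- Hhf, Hu1, comp_assoc; auto. }
    split.
    + assert (H21 : sub_le pp2 pp1).
      { assert (Hgp2 : star g ∘ pp2 = zm P2 A).
        { destruct Hm2 as [_ [[u2 Hu2] _]].
          rewrite Hu2, star_comp, <- comp_assoc, (ker_zero Hp2), zm_l; auto. }
        assert (Hep2 : star f ∘ (star e ∘ pp2) = zm P2 A).
        { rewrite comp_assoc, <- star_comp, He; exact Hgp2. }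
        assert (Hhp2 : star h ∘ pp2 = zm P2 X).
        { unfold h. rewrite star_comp, HPrs, <- comp_assoc, (Hfact _ _ Hep2); auto. }
        destruct (R3 (star pp2)) as [N [n [Hn Hniso]]].
        destruct (ker_fact h Hn) as [v Hv].
        { apply star_zero_eq. rewrite star_comp, star_star, Hhp2; auto. }
        destruct Hm1 as [_ [_ Hmin1]].
        destruct (Hmin1 N n (iso_monic Hniso)) as [w Hw]. { exists v; auto. }
        destruct (ker_fact pp2 Hp1) as [c Hc].
        { apply star_zero_eq. rewrite star_comp, star_star, Hw, comp_assoc, (ker_zero Hn), zm_r; auto. }
        exists c; auto. }
      exact (perp_anti pp2 pp1 q2 q1 H21 Hq2 Hq1).
    + pose proof (perp_anti m2 m1 pp2 pp1 Hm21 Hp2 Hp1) as H12.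
      exact (perp_anti pp1 pp2 q1 q2 H12 Hq1 Hq2).
  -
    split.
    + intro Hfg. pose proof (HhhPr Hfg) as Hhh. split.
      * unfold partial_isometry. rewrite Hhh. symmetry; exact HhPr.
      * intros K M P' k m p' Hk Hm Hp'.
        assert (HPrk : Pr ∘ k = zm K X).
        { rewrite <- Hhh, <- comp_assoc, (ker_zero Hk), zm_l; auto. }
        pose proof (Hfact2 _ _ HPrk) as Hk2.
        destruct (range_perp_ge f p m p' Hp Hm Hp') as [b Hb].
        exists (b ∘ (star p ∘ k)). rewrite comp_assoc, <- Hb. exact Hk2.
    + intros [Hpi Hkle].
      destruct (R3 h) as [K [k [Hk _]]].
      destruct (range_ex f) as [M [m Hm]].
      destruct (R3 (star m)) as [P' [p' [Hp' _]]].
      destruct (Hkle K M P' k m p' Hk Hm Hp') as [a Ha].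
      destruct (range_perp_le f p m p' Hp Hm Hp') as [b Hb].
      set (E := add (idm X) (neg (star h ∘ h))).
      assert (HhE : h ∘ E = zm X Y).
      { unfold E. rewrite add_comp_l, comp_id_r, neg_comp_l, <- Hpi. apply add_neg_r. }
      destruct (ker_fact E Hk HhE) as [c Hc].
      assert (HE' : E = p ∘ (b ∘ (a ∘ c))).
      { rewrite <- Hc, Ha, Hb, !comp_assoc; auto. }
      set (c' := b ∘ (a ∘ c)) in HE'.
      assert (HEs : star E = E).
      { unfold E. rewrite star_add, star_neg, star_id, star_comp, star_star; auto. }
      assert (HEpp : E ∘ p = p).
      { unfold E. rewrite add_comp_r, comp_id_l, neg_comp_r, <- comp_assoc, Hhp, zm_l, neg_zm, add_zero_r; auto. }
      assert (H1 : star E ∘ p = star c').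
      { rewrite HE' at 1. rewrite star_comp, <- comp_assoc, Hpiso, comp_id_r; auto. }
      rewrite HEs, HEpp in H1.
      assert (Hc' : c' = star p) by (rewrite <- (star_star _ _ _ c'), <- H1; auto).
      rewrite Hc' in HE'.
      assert (Hhh : star h ∘ h = Pr).
      { rewrite HPr. symmetry. apply sub_eq. auto. }
      rewrite <- Hhf, star_comp, <- comp_assoc, (comp_assoc _ _ _ _ _ (star h)), Hhh, HPrf; auto.
  -
    intros Hfe Hge. split.
    + intro Hfg. pose proof (proj1 (Hiv Hfe) Hfg) as Hiso.
      split; auto. exists (star h). split; auto.
      apply Hge. rewrite <- Hhf, comp_id_l, !comp_assoc, <- (comp_assoc _ _ _ _ _ h (star h) h), Hiso, comp_id_r; auto.
    + intros [Hiso _]. apply (Hiv Hfe); auto.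
Qed.

End PH.

Theorem proposition7p8 (C : StarCat) (HC : preHilbert C)
  (A X Y : C) (f : hom A X) (g : hom A Y)
  (Hext : exists e : hom X Y, comp e f = g) :
  exists h : hom X Y,
    (* (i) *)
    (comp h f = g /\ ker_ge_perp_ran h f /\
     forall h' : hom X Y, comp h' f = g -> ker_ge_perp_ran h' f -> h' = h) /\
    (* (ii) *)
    ran_perpperp_eq h g /\
    (* (iii) *)
    (comp (star f) f = comp (star g) g <->
       partial_isometry h /\ ker_le_perp_ran h f) /\
    (* (iv) *)
    (epic f -> (comp (star f) f = comp (star g) g <-> isometry h)) /\
    (* (v) *)
    (epic f -> epic g -> (comp (star f) f = comp (star g) g <-> unitary h)).
Proof. exact (main C HC A X Y f g Hext). Qed.
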